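(* Let $X$ be a $T_1$ space in which every open subspace is $C$-embedded (every real-valued continuous function on an open subspace extends to a continuous function on $X$). Then for any two ideals $\mathcal{P},\mathcal{Q}$ of closed subsets of $X$, $C(X)_{\mathcal{P}\vee\mathcal{Q}}=C(X)_\mathcal{P}\vee C(X)_\mathcal{Q}$, where $\mathcal{P}\vee\mathcal{Q}=\{A\cup B\colon A\in\mathcal{P},B\in\mathcal{Q}\}$ and $C(X)_\mathcal{P}\vee C(X)_\mathcal{Q}=\{\sum_{i=1}^m f_ig_i\colon m\in\mathbb{N}, f_i\in C(X)_\mathcal{P}, g_i\in C(X)_\mathcal{Q}\}$.
   Context: An ideal of closed subsets of $X$ is a family $\mathcal{P}$ of closed subsets closed under finite unions and under passing to closed subsets. $D_f$ is the set of discontinuity points of $f\in\mathbb{R}^X$; $C(X)_\mathcal{P}=\{f\in\mathbb{R}^X\colon\overline{D_f}\in\mathcal{P}\}$ with pointwise operations. *)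

(* Defs.v *)
From HB Require Import structures.
From mathcomp Require Import all_boot all_order all_algebra.
From mathcomp Require Import all_classical all_reals all_analysis.
Set Implicit Arguments. Unset Strict Implicit. Unset Printing Implicit Defensive.
Import Order.TTheory GRing.Theory Num.Theory numFieldNormedType.Exports.
Local Open Scope classical_set_scope.
Local Open Scope ring_scope.

Definition discont {X : topologicalType} {R : realType} (f : X -> R) : set X :=
  [set x | ~ {for x, continuous f}].

Definition closed_ideal {X : topologicalType} (P : set (set X)) : Prop :=
  [/\ (forall A, P A -> closed A),
      P set0,
      (forall A B, P A -> P B -> P (A `|` B)) &
      (forall A B, P A -> closed B -> B `<=` A -> P B)].

Definition CP {X : topologicalType} (R : realType) (P : set (set X)) : set (X -> R) :=
  [set f | P (closure (discont f))].

Definition ideal_join {X : topologicalType} (P Q : set (set X)) : set (set X) :=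
  [set C | exists2 A, P A & exists2 B, Q B & C = A `|` B].

Definition ring_join {X : Type} {R : realType} (S T : set (X -> R)) : set (X -> R) :=
  [set h | exists m : nat, exists (f g : 'I_m -> X -> R),
     [/\ (forall i, S (f i)), (forall i, T (g i)) &
         h = (fun x => \sum_(i < m) f i x * g i x)]].

Definition open_C_embedded (X : topologicalType) (R : realType) : Prop :=
  forall (U : set X) (g : X -> R), open U -> {within U, continuous g} ->
    exists h : X -> R, continuous h /\ (forall x, U x -> h x = g x).

(* Main.v *)
Require Import Defs.
From mathcomp Require Import all_boot all_order all_algebra.
From mathcomp Require Import all_classical all_reals all_analysis.
Import numFieldNormedType.Exports.
Local Open Scope classical_set_scope.

Section Helpers.
Import GRing.Theory Num.Theory.
Local Open Scope ring_scope.
Variables (R : realType) (X : topologicalType).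

Lemma cont_of_notcl (h : X -> R) x :
  ~ closure (discont h) x -> {for x, continuous h}.
Proof. by move=> H; apply: contrapT => nc; apply: H; apply: subset_closure. Qed.

Lemma zero_outside (A : set X) (f : X -> R) : closed A ->
  (forall x, ~ A x -> f x = 0) -> closure (discont f) `<=` A.
Proof.
move=> cA f0; rewrite [Z in _ `<=` Z](closure_id A).1 //; apply: closureS.
move=> x /= nc; apply: contrapT => nAx; apply: nc.
apply: (@near_cst_continuous _ _ 0).
have nx : nbhs x (~` A) by apply: open_nbhs_nbhs; split => //; rewrite openC.
by apply: filterS nx => y /f0.
Qed.

Lemma CP_zero_outside (P : set (set X)) (A : set X) (f : X -> R) :
  closed_ideal P -> P A -> (forall x, ~ A x -> f x = 0) -> @CP X R P f.
Proof.
case=> Pc P0 PU PS PA f0; rewrite /CP /=.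
apply: (PS A) => //; first exact: closed_closure.
by apply: zero_outside => //; exact: Pc.
Qed.


Lemma CP_cont (P : set (set X)) (f : X -> R) :
  closed_ideal P -> continuous f -> @CP X R P f.
Proof.
case=> Pc P0 PU PS fc; rewrite /CP /=.
have -> : discont f = set0.
  by apply/seteqP; split => // x /= nc; exfalso; apply: nc; exact: fc.
by rewrite closure0.
Qed.

Lemma big_mem (m : nat) (F : 'I_m -> set X) i x :
  F i x -> (\big[setU/set0]_(j < m) F j) x.
Proof. by move=> Fx; rewrite (bigD1 i) //=; left. Qed.

Lemma ideal_big (P : set (set X)) (m : nat) (F : 'I_m -> set X) :
  closed_ideal P -> (forall i, P (F i)) -> P (\big[setU/set0]_(j < m) F j).
Proof. by case=> _ P0 PU _ PF; apply: big_ind => // i _; exact: PF. Qed.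

End Helpers.

Theorem theorem2p3 (R : realType) (X : topologicalType) :
  accessible_space X ->
  open_C_embedded X R ->
  forall P Q : set (set X), closed_ideal P -> closed_ideal Q ->
  @CP X R (ideal_join P Q) = ring_join (@CP X R P) (@CP X R Q).
Proof.
move=> _ HC P Q cP cQ.
have cP' := cP; have cQ' := cQ.
case: cP' => Pc P0 PU PS; case: cQ' => Qc Q0 QU QS.
apply/seteqP; split => h.
- move=> [A PA [B QB eqAB]].
  set U := ~` closure (discont h).
  have oU : open U by rewrite /U openC; exact: closed_closure.
  have [|k [kc kh]] := HC U h oU.
    rewrite continuous_open_subspace // => x /set_mem Ux.
    exact: cont_of_notcl.
  pose d x := (h x - k x)%R.
  pose f1 x := if pselect (A x) then d x else 0%R.
  pose f2 x := if pselect (A x) then 0%R else if pselect (B x) then d x else 0%R.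
  have cf1 : @CP X R P f1.
    apply: (@CP_zero_outside R X P A) => // x nA.
    by rewrite /f1; case: pselect.
  have cf2 : @CP X R Q f2.
    apply: (@CP_zero_outside R X Q B) => // x nB.
    by rewrite /f2; case: pselect => //; case: pselect.
  have c1P : @CP X R P (fun=> 1%R) by apply: CP_cont => //; exact: cst_continuous.
  have c1Q : @CP X R Q (fun=> 1%R) by apply: CP_cont => //; exact: cst_continuous.
  have ckP : @CP X R P k by exact: CP_cont.
  exists 3%N.
  exists (fun i : 'I_3 => if val i == 0%N then k else if val i == 1%N then f1
                         else fun=> 1%R).
  exists (fun i : 'I_3 => if val i == 2%N then f2 else fun=> 1%R).
  split.
  + by case=> [[|[|[|?]]] ?].
  + by case=> [[|[|[|?]]] ?].
  + apply: funext => x; rewrite !big_ord_recr big_ord0 /=.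
    rewrite !GRing.mulr1 GRing.mul1r GRing.add0r /f1 /f2 /d.
    case: pselect => Ax.
      by rewrite GRing.addr0 GRing.addrC GRing.subrK.
    case: pselect => Bx.
      by rewrite GRing.addr0 GRing.addrC GRing.subrK.
    have Ux : U x by rewrite /U /= eqAB => -[].
    by rewrite kh // !GRing.addr0.
- move=> [m [f [g [Pf Qg ->]]]]; clear h.
  set h := (fun x => _).
  set A := \big[setU/set0]_(i < m) closure (discont (f i)).
  set B := \big[setU/set0]_(i < m) closure (discont (g i)).
  have PA : P A by apply: ideal_big.
  have QB : Q B by apply: ideal_big.
  have cA := Pc _ PA; have cB := Qc _ QB.
  have sub : closure (discont h) `<=` A `|` B.
    rewrite [Z in _ `<=` Z](closure_id (A `|` B)).1; last exact: closedU.
    apply: closureS => x /= nc; apply: contrapT => nAB; apply: nc.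
    have nf i : ~ closure (discont (f i)) x.
      by move=> H; apply: nAB; left; exact: big_mem H.
    have ng i : ~ closure (discont (g i)) x.
      by move=> H; apply: nAB; right; exact: big_mem H.
    rewrite /h; apply: (@cvg_big R _ +%R 0%R xpredT add_continuous) => i _.
    apply: cvgM; exact: cont_of_notcl.
  exists (closure (discont h) `&` A).
    apply: (PS A _ PA); [apply: closedI (cA); exact: closed_closure | exact: subIsetr].
  exists (closure (discont h) `&` B).
    apply: (QS B _ QB); [apply: closedI (cB); exact: closed_closure | exact: subIsetr].
  by rewrite -setIUr; apply/esym/setIidl.
Qed.
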